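(* Let $(A,\cdot)$ be an associative algebra over a field $\mathbf{k}$ of characteristic $0$ and $N:A\to A$ a Nijenhuis operator. Let $\pi_N\in\mathcal{O}_A(2)$ be given by $\pi_N([1];a,b)=a\cdot N(b)$, $\pi_N([2];a,b)=N(a)\cdot b$, $\pi_N([3];a,b)=-N(a\cdot b)$ (the Maurer–Cartan element encoding the NS-algebra induced by $N$). For $n\ge1$ define $\Theta_n:\mathrm{Hom}(A^{\otimes n},A)\to\mathcal{O}_A(n+1)$ by $$\Theta_n(f)([r];a_1,\dots,a_{n+1})=\begin{cases}(-1)^{n+1}a_1\cdot f(a_2,\dots,a_{n+1}) & r=1,\\ 0 & 2\le r\le n,\\ f(a_1,\dots,a_n)\cdot a_{n+1} & r=n+1,\\ \sum_{i=1}^n(-1)^{n+i+1}f(a_1,\dots,a_i\cdot a_{i+1},\dots,a_{n+1}) & r=n+2.\end{cases}$$ Then $\delta_{\pi_N}\circ\Theta_n=\Theta_{n+1}\circ d_N$ for all $n\ge1$, so $\{\Theta_n\}_{n\ge1}$ is a homomorphism of cochain complexes from $\{\bigoplus_{n\ge1}\mathrm{Hom}(A^{\otimes n},A),d_N\}$ to $\{\bigoplus_{n\ge1}\mathcal{O}_A(n+1),\delta_{\pi_N}\}$, and it induces homomorphisms $\Theta:H^n(N)\to H^{n+1}_{\mathrm{NS}}(A_{\mathrm{NS}})$.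
   Context: A Nijenhuis operator on $(A,\cdot)$ is a linear $N$ with $N(a)N(b)=N(N(a)b+aN(b)-N(ab))$. The map $d_N:\mathrm{Hom}(A^{\otimes n},A)\to\mathrm{Hom}(A^{\otimes n+1},A)$ is, for $n\ge1$, $(d_Nf)(a_1,\dots,a_{n+1})=N(a_1)\cdot f(a_2,\dots,a_{n+1})-(-1)^nf(a_1,\dots,a_n)\cdot N(a_{n+1})+\sum_{i=1}^n(-1)^if(a_1,\dots,a_{i-1},N(a_i)a_{i+1}+a_iN(a_{i+1})-N(a_ia_{i+1}),\dots,a_{n+1})-N\big((\delta_{\mathrm{Hoch}}f)(a_1,\dots,a_{n+1})\big)$, where $(\delta_{\mathrm{Hoch}}f)(a_1,\dots,a_{n+1})=a_1f(a_2,\dots,a_{n+1})+\sum_{i=1}^n(-1)^if(a_1,\dots,a_ia_{i+1},\dots,a_{n+1})+(-1)^{n+1}f(a_1,\dots,a_n)a_{n+1}$; and on $A=\mathrm{Hom}(A^{\otimes0},A)$, $d_N(a)(b)=N(b)a-aN(b)-N(ba-ab)$. Then $d_N^2=0$ and $H^\bullet(N)$ denotes the cohomology of $\{\bigoplus_{n\ge0}\mathrm{Hom}(A^{\otimes n},A),d_N\}$. Let $C_n=\{[1],\dots,[n]\}$ be formal symbols. $\mathcal{O}_A(1)=\mathrm{Hom}(\mathbf{k}[C_1]\otimes A,A)$ and $\mathcal{O}_A(n)=\mathrm{Hom}(\mathbf{k}[C_{n+1}]\otimes A^{\otimes n},A)$ for $n\ge2$. For $f\in\mathcal{O}_A(m)$,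 $g\in\mathcal{O}_A(n)$ with $m,n\ge2$ and $1\le i\le m$, write $G_*=\sum_{j=1}^{n+1}g([j];a_i,\dots,a_{i+n-1})$; then $f\circ_ig\in\mathcal{O}_A(m+n-1)$ is: for $1\le r\le i-1$, $f([r];a_1,\dots,a_{i-1},G_*,a_{i+n},\dots,a_{m+n-1})$; for $i\le r\le i+n-1$, $f([i];a_1,\dots,a_{i-1},g([r-i+1];a_i,\dots,a_{i+n-1}),\dots,a_{m+n-1})$; for $i+n\le r\le m+n-1$, $f([r-n+1];a_1,\dots,a_{i-1},G_*,\dots,a_{m+n-1})$; for $r=m+n$, $f([i];\dots,g([n+1];a_i,\dots,a_{i+n-1}),\dots)+f([m+1];\dots,G_*,\dots)$. Set $[\![f,g]\!]=\sum_{i=1}^m(-1)^{(i-1)(n-1)}f\circ_ig-(-1)^{(m-1)(n-1)}\sum_{i=1}^n(-1)^{(i-1)(m-1)}g\circ_if$ and, for an NS-algebra structure $\pi\in\mathcal{O}_A(2)$, $\delta_\pi(f)=(-1)^{n-1}[\![\pi,f]\!]$ for $f\in\mathcal{O}_A(n)$. $H^\bullet_{\mathrm{NS}}$ is the cohomology of $\{\bigoplus_{n\ge1}\mathcal{O}_A(n),\delta_\pi\}$; $A_{\mathrm{NS}}$ is the NS-algebra $(A,\prec_N,\succ_N,\curlyvee_N)$ with $a\prec_Nb=a\cdot N(b)$, $a\succ_Nb=N(a)\cdot b$, $a\curlyvee_Nb=-N(a\cdot b)$, corresponding to $\pi=\pi_N$. *)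

(* Defs.v *)
From mathcomp Require Import all_boot all_order all_algebra.
Set Implicit Arguments. Unset Strict Implicit. Unset Printing Implicit Defensive.
Import Order.TTheory GRing.Theory Num.Theory.
Local Open Scope ring_scope.

(* Conventions: a (possibly non-unital) associative k-algebra is a k-module
   A with a multiplication mul : A -> A -> A (bilinearity/associativity are
   hypotheses of the theorem).  An element of Hom(A^{ox n}, A) is represented
   by a function f : seq A -> A which is multilinear on lists of size n
   (its values on lists of other sizes are irrelevant).  An element of
   O_A(n) = Hom(k[C_{n+1}] ox A^{ox n}, A) is represented by
   F : nat -> seq A -> A, where F r s stands for F([r]; s) (1-based r,
   1 <= r <= n+1, size s = n).  All list positions in the formulas below are
   1-based as in the paper: a_j = nth 0 s (j-1). *)

Section Defs.
Variables (k : fieldType) (A : lmodType k).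
Implicit Types (mul : A -> A -> A) (N : A -> A).

Definition sgn (e : nat) (v : A) : A := (-1) ^+ e *: v.

Definition multilinear (n : nat) (f : seq A -> A) : Prop :=
  forall (s : seq A) (i : nat), size s = n -> (i < n)%N ->
  forall (c : k) (x y : A),
    f (set_nth 0 s i (c *: x + y)) =
    c *: f (set_nth 0 s i x) + f (set_nth 0 s i y).

(* replace a_i, a_{i+1} (1-based i) by op a_i a_{i+1} *)
Definition contract (op : A -> A -> A) (i : nat) (s : seq A) : seq A :=
  take i.-1 s ++ op (nth 0 s i.-1) (nth 0 s i) :: drop i.+1 s.

Definition is_Nijenhuis mul N : Prop :=
  forall a b, mul (N a) (N b) = N (mul (N a) b + mul a (N b) - N (mul a b)).

Definition brN mul N (a b : A) : A := mul (N a) b + mul a (N b) - N (mul a b).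

(* Hochschild coboundary of f of arity n (input of size n+1) *)
Definition hoch mul (n : nat) (f : seq A -> A) (s : seq A) : A :=
  mul (nth 0 s 0) (f (behead s))
  + \sum_(1 <= i < n.+1) sgn i (f (contract mul i s))
  + sgn n.+1 (mul (f (take n s)) (nth 0 s n)).

Definition dN mul N (n : nat) (f : seq A -> A) (s : seq A) : A :=
  mul (N (nth 0 s 0)) (f (behead s))
  - sgn n (mul (f (take n s)) (N (nth 0 s n)))
  + \sum_(1 <= i < n.+1) sgn i (f (contract (brN mul N) i s))
  - N (hoch mul n f s).

Definition subst_block (i n : nat) (X : A) (s : seq A) : seq A :=
  take i.-1 s ++ X :: drop (i.-1 + n) s.

Definition block (i n : nat) (s : seq A) : seq A := take n (drop i.-1 s).

Definition pcomp (m n i : nat) (f g : nat -> seq A -> A) : nat -> seq A -> A :=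
  fun r s =>
    let sl := block i n s in
    let Gs := \sum_(1 <= j < n.+2) g j sl in
    if (r <= i.-1)%N then f r (subst_block i n Gs s)
    else if (r <= i + n - 1)%N then f i (subst_block i n (g (r - i + 1)%N sl) s)
    else if (r <= m + n - 1)%N then f (r - n + 1)%N (subst_block i n Gs s)
    else if r == (m + n)%N then
      f i (subst_block i n (g n.+1 sl) s) + f m.+1 (subst_block i n Gs s)
    else 0.

Definition nsbracket (m n : nat) (f g : nat -> seq A -> A) : nat -> seq A -> A :=
  fun r s =>
    \sum_(1 <= i < m.+1) sgn ((i - 1) * (n - 1)) (pcomp m n i f g r s)
    - sgn ((m - 1) * (n - 1))
        (\sum_(1 <= i < n.+1) sgn ((i - 1) * (m - 1)) (pcomp n m i g f r s)).

Definition deltaNS (pi : nat -> seq A -> A) (n : nat) (F : nat -> seq A -> A)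
  : nat -> seq A -> A :=
  fun r s => sgn (n - 1) (nsbracket 2 n pi F r s).

Definition piN mul N : nat -> seq A -> A :=
  fun r s =>
    let a := nth 0 s 0 in let b := nth 0 s 1 in
    if r == 1%N then mul a (N b)
    else if r == 2%N then mul (N a) b
    else if r == 3%N then - N (mul a b)
    else 0.

Definition Theta mul (n : nat) (f : seq A -> A) : nat -> seq A -> A :=
  fun r s =>
    if r == 1%N then sgn n.+1 (mul (nth 0 s 0) (f (behead s)))
    else if (r <= n)%N then 0
    else if r == n.+1 then mul (f (take n s)) (nth 0 s n)
    else if r == n.+2 then
      \sum_(1 <= i < n.+1) sgn (n + i + 1) (f (contract mul i s))
    else 0.

End Defs.

(* Main.v *)
From mathcomp Require Import all_boot all_order all_algebra.
Set Implicit Arguments. Unset Strict Implicit. Unset Printing Implicit Defensive.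
Import GRing.Theory.
Local Open Scope ring_scope.
Require Import Defs.
From mathcomp Require Import zify.
Section AC.
Variable V : zmodType.
Inductive aterm := AAtom of nat | AAdd of aterm & aterm | AOpp of aterm | AZero.
Fixpoint aev (env : seq V) t := match t with
  | AAtom i => nth 0 env i | AAdd a b => aev env a + aev env b
  | AOpp a => - aev env a | AZero => 0 end.
Fixpoint aflat t : seq (bool * nat) := match t with
  | AAtom i => [:: (false, i)] | AAdd a b => aflat a ++ aflat b
  | AOpp a => map (fun p => (~~ p.1, p.2)) (aflat a) | AZero => [::] end.
Definition lev (env : seq V) (l : seq (bool * nat)) :=
  \sum_(p <- l) (if p.1 then - nth 0 env p.2 else nth 0 env p.2).
Lemma aflatE env t : aev env t = lev env (aflat t).
Proof.
elim: t => [i|a iha b ihb|a iha|] /=.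
- by rewrite /lev big_cons big_nil addr0.
- by rewrite iha ihb /lev big_cat.
- rewrite iha /lev big_map -sumrN; apply: eq_bigr => -[[] j] _ //=.
  by rewrite opprK.
- by rewrite /lev big_nil.
Qed.
Lemma ac_close env t1 t2 :
  perm_eq [seq p.2 | p <- aflat (AAdd t1 (AOpp t2)) & ~~ p.1]
          [seq p.2 | p <- aflat (AAdd t1 (AOpp t2)) & p.1] ->
  aev env t1 = aev env t2.
Proof.
move=> hp; apply/eqP; rewrite -subr_eq0.
have -> : aev env t1 - aev env t2 = aev env (AAdd t1 (AOpp t2)) by [].
rewrite aflatE /lev; move: hp; set l := aflat _ => hp.
rewrite (bigID (fun p => p.1)) /=.
have e1 : \sum_(p <- l | p.1) (if p.1 then - nth 0 env p.2 else nth 0 env p.2)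
   = - \sum_(i <- [seq p.2 | p <- l & p.1]) nth 0 env i.
  rewrite big_map big_filter -sumrN; apply: eq_bigr => p ->; done.
have e2 : \sum_(p <- l | ~~ p.1) (if p.1 then - nth 0 env p.2 else nth 0 env p.2)
   = \sum_(i <- [seq p.2 | p <- l & ~~ p.1]) nth 0 env i.
  rewrite big_map big_filter; apply: eq_bigr => p /negbTE ->; done.
by rewrite e1 e2 (perm_big _ hp) addNr.
Qed.
End AC.

Ltac ac_len env := lazymatch env with
  | nil => constr:(0%N) | cons _ ?e => let n := ac_len e in constr:(S n) end.
Ltac ac_find x env := lazymatch env with
  | cons ?y ?e => match constr:(tt) with
      | _ => let _ := match goal with _ => unify x y end in constr:(0%N)
      | _ => let n := ac_find x e in constr:(S n) end end.
Ltac ac_snoc env E := lazymatch env with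
  | nil => constr:([:: E]) | cons ?x ?e => let e' := ac_snoc e E in constr:(x :: e') end.
Ltac ac_reify env E :=
  lazymatch E with
  | @GRing.add _ ?a ?b =>
      let r1 := ac_reify env a in
      lazymatch r1 with (?ta, ?e1) =>
        let r2 := ac_reify e1 b in
        lazymatch r2 with (?tb, ?e2) => constr:((AAdd ta tb, e2)) end end
  | @GRing.opp _ ?a =>
      let r1 := ac_reify env a in
      lazymatch r1 with (?ta, ?e1) => constr:((AOpp ta, e1)) end
  | @GRing.zero _ => constr:((AZero, env))
  | _ => match constr:(tt) with
         | _ => let i := ac_find E env in constr:((AAtom i, env))
         | _ => let i := ac_len env in let e' := ac_snoc env E in constr:((AAtom i, e'))
         end
  end.
Ltac ac_eq := lazymatch goal with |- @eq ?T ?L ?R =>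
  let r1 := ac_reify (@nil T) L in lazymatch r1 with (?t1, ?e1) =>
  let r2 := ac_reify e1 R in lazymatch r2 with (?t2, ?e2) =>
  change (aev e2 t1 = aev e2 t2); apply: ac_close; by vm_compute end end end.



Ltac slia := repeat match goal with H : context [size _] |- _ => revert H end;
  repeat match goal with |- context [size ?s] => let m := fresh "m" in set m := size s; clearbody m end;
  intros; lia.
Ltac ifs := repeat (case: ifP => /= ?); try (exfalso; slia).
Ltac nfin := first [ reflexivity | (f_equal; slia) | (f_equal; f_equal; slia) ].

Section Lists.
Variables (k : fieldType) (A : lmodType k).
Implicit Types (s : seq A) (o : A -> A -> A).

Lemma size_contract o i s : (1 <= i < size s)%N -> size (contract o i s) = (size s).-1.
Proof. move=> h; rewrite /contract size_cat /= size_takel ?size_drop; slia. Qed.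

Lemma nth_contract o i s j : (1 <= i < size s)%N ->
  nth 0 (contract o i s) j = if (j < i.-1)%N then nth 0 s j
     else if j == i.-1 then o (nth 0 s i.-1) (nth 0 s i) else nth 0 s j.+1.
Proof.
move=> h; rewrite /contract nth_cat size_takel; last slia.
case: ifP => h1; first by rewrite nth_take.
have [->|hne] := eqVneq j i.-1; first by rewrite subnn.
have -> : (j - i.-1 = (j - i).+1)%N by slia.
rewrite /= nth_drop; congr nth; slia.
Qed.

Lemma subst2 i X s : (1 <= i)%N -> subst_block i 2 X s = take i.-1 s ++ X :: drop i.+1 s.
Proof. by move=> h; rewrite /subst_block; have -> : (i.-1 + 2 = i.+1)%N by slia. Qed.

Lemma subst2c o i s : (1 <= i)%N ->
  subst_block i 2 (o (nth 0 s i.-1) (nth 0 s i)) s = contract o i s.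
Proof. by move=> h; rewrite subst2. Qed.

Lemma block2 i s : (1 <= i < size s)%N -> block i 2 s = [:: nth 0 s i.-1; nth 0 s i].
Proof.
move=> h; apply: (@eq_from_nth _ 0).
  rewrite /block size_takel // size_drop; slia.
move=> j; rewrite /block size_takel ?size_drop; last slia.
move=> hj; rewrite nth_take // nth_drop.
case: j hj => [|[|j]] //= _; congr nth; slia.
Qed.

Variable n : nat.
Lemma block1 s : block 1 n.+1 s = take n.+1 s.
Proof. by rewrite /block drop0. Qed.
Lemma subst1 X s : size s = n.+2 -> subst_block 1 n.+1 X s = [:: X; nth 0 s n.+1].
Proof.
move=> hs; rewrite /subst_block take0 add0n (drop_nth 0) ?drop_oversize //; slia.
Qed.
Lemma block2n s : size s = n.+2 -> block 2 n.+1 s = behead s.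
Proof. move=> hs; rewrite /block /= drop1 take_oversize // size_behead; slia. Qed.
Lemma subst2n X s : size s = n.+2 -> subst_block 2 n.+1 X s = [:: nth 0 s 0; X].
Proof.
move=> hs; rewrite /subst_block /=.
have -> : drop (1 + n.+1) s = [::] by apply: drop_oversize; slia.
case: s hs => [|a s'] //= _; by rewrite take0.
Qed.

Lemma behead_contract o i s : (2 <= i < size s)%N ->
  behead (contract o i s) = contract o i.-1 (behead s).
Proof.
move=> h; apply: (@eq_from_nth _ 0).
  rewrite size_behead !size_contract ?size_behead; slia.
move=> j; rewrite size_behead size_contract; last slia.
move=> hj; rewrite nth_behead !nth_contract ?size_behead; try slia.
rewrite !nth_behead; ifs; nfin.
Qed.
Lemma behead_contract1 o s : (2 <= size s)%N ->
  behead (contract o 1 s) = behead (behead s).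
Proof. by case: s => [|a [|b s]] //= _; rewrite /contract /= drop0. Qed.

Lemma take_contract o i s : size s = n.+2 -> (1 <= i <= n)%N ->
  take n (contract o i s) = contract o i (take n.+1 s).
Proof.
move=> hs h; apply: (@eq_from_nth _ 0).
  rewrite size_takel ?size_contract ?size_takel; slia.
move=> j; rewrite size_takel ?size_contract; try slia.
move=> hj; rewrite nth_take // !nth_contract ?size_takel; try slia.
ifs; rewrite !nth_take; try nfin; slia.
Qed.
Lemma take_contractn o s : size s = n.+2 -> take n (contract o n.+1 s) = take n s.
Proof.
move=> hs; apply: (@eq_from_nth _ 0).
  rewrite !size_takel ?size_contract; slia.
move=> j; rewrite size_takel ?size_contract; try slia.
move=> hj; rewrite !nth_take // !nth_contract; try slia. ifs; try nfin.
Qed.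
Lemma nth0_contract o i s : (2 <= i < size s)%N -> nth 0 (contract o i s) 0 = nth 0 s 0.
Proof. by move=> h; rewrite nth_contract; [ifs|slia]. Qed.
Lemma nth0_contract1 o s : (2 <= size s)%N ->
  nth 0 (contract o 1 s) 0 = o (nth 0 s 0) (nth 0 s 1).
Proof. by move=> h; rewrite nth_contract; [ifs|slia]. Qed.
Lemma nthn_contract o i s : size s = n.+2 -> (1 <= i <= n)%N ->
  nth 0 (contract o i s) n = nth 0 s n.+1.
Proof. by move=> hs h; rewrite nth_contract; [ifs|slia]. Qed.
Lemma nthn_contractn o s : size s = n.+2 ->
  nth 0 (contract o n.+1 s) n = o (nth 0 s n) (nth 0 s n.+1).
Proof. by move=> hs; rewrite nth_contract; [ifs|slia]. Qed.

Lemma contract_comm oa ob p q s : (1 <= p)%N -> (p.+2 <= q)%N -> (q < size s)%N ->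
  contract oa p (contract ob q s) = contract ob q.-1 (contract oa p s).
Proof.
move=> h1 h2 h3; apply: (@eq_from_nth _ 0).
  rewrite !size_contract ?size_contract; slia.
move=> j; rewrite !size_contract; try slia.
move=> hj; rewrite !nth_contract ?size_contract; try slia.
ifs; try nfin.
Qed.

Lemma contract_ov1 o1 o2 p s : (1 <= p)%N -> (p.+1 < size s)%N ->
  contract o2 p (contract o1 p.+1 s) =
  take p.-1 s ++ o2 (nth 0 s p.-1) (o1 (nth 0 s p) (nth 0 s p.+1)) :: drop p.+2 s.
Proof.
move=> h1 h2; apply: (@eq_from_nth _ 0).
  rewrite size_contract; last by rewrite size_contract; slia.
  rewrite size_contract; last slia.
  rewrite size_cat /= size_takel ?size_drop; slia.
move=> j; rewrite !size_contract; try slia.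
move=> hj; rewrite !nth_contract ?size_contract; try slia.
rewrite nth_cat size_takel; last slia.
ifs; rewrite ?nth_take; try slia; try nfin;
  try (have -> : (j - p.-1 = 0)%N by slia); try nfin.
have -> : (j - p.-1 = (j - p).+1)%N by slia.
rewrite /= nth_drop; nfin.
Qed.
Lemma contract_ov2 o1 o2 p s : (1 <= p)%N -> (p.+1 < size s)%N ->
  contract o2 p (contract o1 p s) =
  take p.-1 s ++ o2 (o1 (nth 0 s p.-1) (nth 0 s p)) (nth 0 s p.+1) :: drop p.+2 s.
Proof.
move=> h1 h2; apply: (@eq_from_nth _ 0).
  rewrite size_contract; last by rewrite size_contract; slia.
  rewrite size_contract; last slia.
  rewrite size_cat /= size_takel ?size_drop; slia.
move=> j; rewrite !size_contract; try slia.
move=> hj; rewrite !nth_contract ?size_contract; try slia.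
rewrite nth_cat size_takel; last slia.
ifs; rewrite ?nth_take; try slia; try nfin;
  try (have -> : (j - p.-1 = 0)%N by slia); try nfin.
have -> : (j - p.-1 = (j - p).+1)%N by slia.
rewrite /= nth_drop; nfin.
Qed.
Lemma behead_take s : behead (take n.+1 s) = take n (behead s).
Proof. by case: s. Qed.
End Lists.

Section Sgn.
Variables (k : fieldType) (A : lmodType k).
Lemma sgnE e (v : A) : sgn e v = if odd e then - v else v.
Proof. by rewrite /sgn -signr_odd; case: (odd e); rewrite ?expr1 ?scaleN1r ?expr0 ?scale1r. Qed.
Lemma sgn_sum e I (r : seq I) (P : pred I) (F : I -> A) :
  sgn e (\sum_(i <- r | P i) F i) = \sum_(i <- r | P i) sgn e (F i).
Proof. exact: scaler_sumr. Qed.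
Lemma sgnDr e (x y : A) : sgn e (x + y) = sgn e x + sgn e y.
Proof. exact: scalerDr. Qed.
Lemma sgnN e (x : A) : sgn e (- x) = - sgn e x.
Proof. exact: scalerN. Qed.
Lemma sgnB e (x y : A) : sgn e (x - y) = sgn e x - sgn e y.
Proof. by rewrite sgnDr sgnN. Qed.
Lemma sgnD a b (v : A) : sgn (a + b) v = sgn a (sgn b v).
Proof. by rewrite !sgnE oddD; case: (odd a); case: (odd b); rewrite /= ?opprK. Qed.
Lemma sgnK e (v : A) : sgn e (sgn e v) = v.
Proof. by rewrite !sgnE; case: (odd e); rewrite ?opprK. Qed.
Lemma sgn0 (v : A) : sgn 0 v = v.
Proof. by rewrite sgnE. Qed.
Lemma sgnS e (v : A) : sgn e.+1 v = - sgn e v.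
Proof. by rewrite !sgnE /=; case: (odd e); rewrite /= ?opprK. Qed.
Lemma sgn_0 e : sgn e (0 : A) = 0.
Proof. exact: scaler0. Qed.
End Sgn.

Lemma sum_if_eq (V : zmodType) (F : nat -> V) (c a b : nat) :
  \sum_(a <= j < b) (if j == c then F j else 0) = if (a <= c < b)%N then F c else 0.
Proof. by rewrite -big_mkcond big_nat1_eq. Qed.


Section Main.
Variables (k : fieldType) (A : lmodType k) (mul : A -> A -> A) (N : A -> A).
Hypothesis mulDl : forall (c : k) (x y z : A), mul (c *: x + y) z = c *: mul x z + mul y z.
Hypothesis mulDr : forall (c : k) (x y z : A), mul z (c *: x + y) = c *: mul z x + mul z y.
Hypothesis mulA : forall x y z : A, mul (mul x y) z = mul x (mul y z).
Hypothesis NL : forall (c : k) (x y : A), N (c *: x + y) = c *: N x + N y.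
Variables (n : nat) (f : seq A -> A) (s : seq A).
Hypothesis n1 : (1 <= n)%N.
Hypothesis fml : multilinear n f.
Hypothesis hs : size s = n.+2.

Lemma mul0l x : mul 0 x = 0.
Proof.
have h := mulDl 1 0 0 x; rewrite scaler0 addr0 scale1r in h.
by apply: (addrI (mul 0 x)); rewrite addr0 -h.
Qed.
Lemma mul0r x : mul x 0 = 0.
Proof.
have h := mulDr 1 0 0 x; rewrite scaler0 addr0 scale1r in h.
by apply: (addrI (mul x 0)); rewrite addr0 -h.
Qed.
Lemma N0 : N 0 = 0.
Proof.
have h := NL 1 0 0; rewrite scaler0 addr0 scale1r in h.
by apply: (addrI (N 0)); rewrite addr0 -h.
Qed.
Lemma mulDl' x y z : mul (x + y) z = mul x z + mul y z.
Proof. by have := mulDl 1 x y z; rewrite !scale1r. Qed.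
Lemma mulDr' x y z : mul z (x + y) = mul z x + mul z y.
Proof. by have := mulDr 1 x y z; rewrite !scale1r. Qed.
Lemma ND x y : N (x + y) = N x + N y.
Proof. by have := NL 1 x y; rewrite !scale1r. Qed.
Lemma mulZl c x z : mul (c *: x) z = c *: mul x z.
Proof. by have := mulDl c x 0 z; rewrite !addr0 mul0l addr0. Qed.
Lemma mulZr c x z : mul z (c *: x) = c *: mul z x.
Proof. by have := mulDr c x 0 z; rewrite !addr0 mul0r addr0. Qed.
Lemma NZ c x : N (c *: x) = c *: N x.
Proof. by have := NL c x 0; rewrite !addr0 N0 addr0. Qed.
Lemma mulNl x z : mul (- x) z = - mul x z.
Proof. by rewrite -scaleN1r mulZl scaleN1r. Qed.
Lemma mulNr x z : mul z (- x) = - mul z x.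
Proof. by rewrite -scaleN1r mulZr scaleN1r. Qed.
Lemma NN x : N (- x) = - N x.
Proof. by rewrite -scaleN1r NZ scaleN1r. Qed.
Lemma mulBl x y z : mul (x - y) z = mul x z - mul y z.
Proof. by rewrite mulDl' mulNl. Qed.
Lemma mulBr x y z : mul z (x - y) = mul z x - mul z y.
Proof. by rewrite mulDr' mulNr. Qed.
Lemma NB x y : N (x - y) = N x - N y.
Proof. by rewrite ND NN. Qed.
Lemma mul_suml I (r : seq I) (P : pred I) (F : I -> A) z :
  mul (\sum_(i <- r | P i) F i) z = \sum_(i <- r | P i) mul (F i) z.
Proof. exact: (big_morph (fun x => mul x z) (fun x y => mulDl' x y z) (mul0l z)). Qed.
Lemma mul_sumr I (r : seq I) (P : pred I) (F : I -> A) z :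
  mul z (\sum_(i <- r | P i) F i) = \sum_(i <- r | P i) mul z (F i).
Proof. exact: (big_morph (fun x => mul z x) (fun x y => mulDr' x y z) (mul0r z)). Qed.
Lemma N_sum I (r : seq I) (P : pred I) (F : I -> A) :
  N (\sum_(i <- r | P i) F i) = \sum_(i <- r | P i) N (F i).
Proof. exact: (big_morph N ND N0). Qed.
Lemma mul_sgnl e x z : mul (sgn e x) z = sgn e (mul x z).
Proof. exact: mulZl. Qed.
Lemma mul_sgnr e x z : mul z (sgn e x) = sgn e (mul z x).
Proof. exact: mulZr. Qed.
Lemma N_sgn e x : N (sgn e x) = sgn e (N x).
Proof. exact: NZ. Qed.

Notation Th := (Theta mul n f).

Lemma Th1 t : Th 1 t = sgn n.+1 (mul (nth 0 t 0) (f (behead t))).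
Proof. by []. Qed.
Lemma Thmid r t : (2 <= r <= n)%N -> Th r t = 0.
Proof. by move=> h; rewrite /Theta; ifs. Qed.
Lemma Thn1 t : Th n.+1 t = mul (f (take n t)) (nth 0 t n).
Proof. by rewrite /Theta; ifs. Qed.
Lemma Thn2 t : Th n.+2 t = \sum_(1 <= i < n.+1) sgn (n + i + 1) (f (contract mul i t)).
Proof. by rewrite /Theta; ifs. Qed.
Lemma Thout r t : (n.+2 < r)%N -> Th r t = 0.
Proof. by move=> h; rewrite /Theta; ifs. Qed.
Lemma Th_sum t : \sum_(1 <= j < n.+3) Th j t = Th 1 t + Th n.+1 t + Th n.+2 t.
Proof.
rewrite big_ltn // big_nat_recr //= big_nat_recr /=; last slia.
rewrite big_nat_cond big1 ?add0r ?addrA //.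
by move=> j /andP[/andP[h1 h2] _]; apply: Thmid; slia.
Qed.
Lemma Gs_hoch t : \sum_(1 <= j < n.+3) Th j t = sgn n.+1 (hoch mul n f t).
Proof.
rewrite Th_sum Th1 Thn1 Thn2 /hoch !sgnDr sgn_sum sgnK.
have -> : \sum_(1 <= i < n.+1) sgn n.+1 (sgn i (f (contract mul i t)))
   = \sum_(1 <= i < n.+1) sgn (n + i + 1) (f (contract mul i t)).
  by apply: eq_bigr => i _; rewrite -sgnD; congr sgn; slia.
ac_eq.
Qed.

Implicit Types (o : A -> A -> A).

Definition Cs o1 o2 := \sum_(1 <= i < n.+2) \sum_(1 <= j < n.+1)
   sgn (i + j) (f (contract o2 j (contract o1 i s))).
Definition Ks o o' p q := sgn (p + q) (f (contract o p (contract o' q s))).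
Definition Gs o1 o2 p q := if (p.+2 <= q)%N then Ks o1 o2 p q + Ks o2 o1 p q else 0.
Definition W1 o1 o2 p := f (contract o2 p (contract o1 p.+1 s)) + f (contract o1 p (contract o2 p.+1 s)).
Definition W2 o1 o2 p := f (contract o2 p (contract o1 p s)) + f (contract o1 p (contract o2 p s)).

Lemma Cs_pt o1 o2 i j : (1 <= i < n.+2)%N -> (1 <= j < n.+1)%N ->
  sgn (i + j) (f (contract o2 j (contract o1 i s))) + sgn (i + j) (f (contract o1 j (contract o2 i s)))
  = Gs o1 o2 j i - Gs o1 o2 i j.+1 + (if j == i.-1 then - W1 o1 o2 j else 0)
    + (if j == i then W2 o1 o2 i else 0).
Proof.
move=> hi hj; rewrite /Gs /W1 /W2 /Ks.
have [h|h|h] := ltngtP j.+1 i.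
- ifs.
  rewrite (addnC j i); ac_eq.
- have [h2|h2|h2] := ltngtP j i; first by exfalso; slia.
  + ifs.
    rewrite -!(@contract_comm _ _ _ _ i j.+1) //; try slia.
    rewrite addnS sgnS (sgnS _ (f (contract o2 i _))) /=; ac_eq.
  + subst j. ifs.
    rewrite ?sgnE addnn odd_double; ac_eq.
- ifs.
  subst i; rewrite ?sgnE addSn addnn oddS odd_double /=; ac_eq.
Qed.

Lemma Cs_swap o1 o2 : Cs o1 o2 + Cs o2 o1 = \sum_(1 <= p < n.+1) (W2 o1 o2 p - W1 o1 o2 p).
Proof.
rewrite /Cs -big_split /=.
transitivity (\sum_(1 <= i < n.+2) \sum_(1 <= j < n.+1) (Gs o1 o2 j i - Gs o1 o2 i j.+1
   + (if j == i.-1 then - W1 o1 o2 j else 0) + (if j == i then W2 o1 o2 i else 0))).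
  apply: eq_big_nat => i hi; rewrite -big_split; apply: eq_big_nat => j hj /=; exact: Cs_pt.
set RR := (X in _ = X).
under eq_bigr => i _ do rewrite !big_split /= sumrN.
rewrite !big_split /= sumrN.
have eG : \sum_(1 <= i < n.+2) \sum_(1 <= j < n.+1) Gs o1 o2 j i
        = \sum_(1 <= i < n.+2) \sum_(1 <= j < n.+1) Gs o1 o2 i j.+1.
  transitivity (\sum_(1 <= i < n.+2) \sum_(1 <= j < n.+2) Gs o1 o2 j i).
    apply: eq_big_nat => i hi; rewrite [RHS]big_nat_recr //=.
    by rewrite {3}/Gs ifF ?addr0 //; slia.
  rewrite exchange_big_nat; apply: eq_big_nat => i hi.
  rewrite -(big_add1 _ _ 1 n.+2 xpredT (fun q => Gs o1 o2 i q)) big_ltn //.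
  have -> : Gs o1 o2 i 1 = 0 by rewrite /Gs; ifs.
  exact: add0r.
have eX : \sum_(1 <= i < n.+2) \sum_(1 <= j < n.+1) (if j == i.-1 then - W1 o1 o2 j else 0)
        = \sum_(1 <= p < n.+1) - W1 o1 o2 p.
  under eq_bigr => i _ do rewrite (sum_if_eq (fun j => - W1 o1 o2 j)).
  rewrite big_ltn //= add0r big_add1 /=; apply: eq_big_nat => i hi.
  by rewrite ifT //; slia.
have eY : \sum_(1 <= i < n.+2) \sum_(1 <= j < n.+1) (if j == i then W2 o1 o2 i else 0)
        = \sum_(1 <= p < n.+1) W2 o1 o2 p.
  under eq_bigr => i _ do rewrite (sum_if_eq (fun j => W2 o1 o2 i)).
  rewrite big_nat_recr //= ifF ?addr0; last slia.
  by apply: eq_big_nat => i hi; rewrite ifT //; slia.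
rewrite eX eY [X in X + _ + _ = _](_ : _ = 0); last by rewrite eG; exact: subrr.
rewrite add0r /RR sumrB sumrN; ac_eq.
Qed.

Lemma set_nth_cat0 (L R : seq A) z : set_nth 0 (L ++ 0 :: R) (size L) z = L ++ z :: R.
Proof. by elim: L => //= a L ->. Qed.
Lemma flin (L R : seq A) c x y : (size L + (size R).+1 = n)%N ->
  f (L ++ (c *: x + y) :: R) = c *: f (L ++ x :: R) + f (L ++ y :: R).
Proof.
move=> h; have := fml (s := L ++ 0 :: R) (i := size L) _ _ c x y.
rewrite !set_nth_cat0; apply; first by rewrite size_cat.
slia.
Qed.
Lemma f0 (L R : seq A) : (size L + (size R).+1 = n)%N -> f (L ++ 0 :: R) = 0.
Proof.
move=> h; have := flin 1 0 0 h; rewrite scaler0 addr0 scale1r => e.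
by apply: (addrI (f (L ++ 0 :: R))); rewrite addr0 -e.
Qed.
Lemma fD (L R : seq A) x y : (size L + (size R).+1 = n)%N ->
  f (L ++ (x + y) :: R) = f (L ++ x :: R) + f (L ++ y :: R).
Proof. by move=> h; have := flin 1 x y h; rewrite !scale1r. Qed.
Lemma fN (L R : seq A) x : (size L + (size R).+1 = n)%N ->
  f (L ++ (- x) :: R) = - f (L ++ x :: R).
Proof. by move=> h; have := flin (-1) x 0 h; rewrite addr0 f0 // addr0 !scaleN1r. Qed.

Lemma W_eq0 o1 o2 (W : A -> A -> A -> A)
  (hW : forall x y z, o2 (o1 x y) z + o1 (o2 x y) z - (o2 x (o1 y z) + o1 x (o2 y z)) = W x y z)
  (hW0 : forall x y z, W x y z = 0) :
  \sum_(1 <= p < n.+1) (W2 o1 o2 p - W1 o1 o2 p) = 0.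
Proof.
rewrite big_nat_cond big1 // => p /andP[/andP[h1 h2] _].
rewrite /W1 /W2 !contract_ov1 ?contract_ov2; try slia.
have hsz : (size (take p.-1 s) + (size (drop p.+2 s)).+1 = n)%N.
  rewrite size_takel ?size_drop; slia.
rewrite -!fD // -fN // -fD // hW hW0 f0 //.
Qed.

Hypothesis hchar : [pchar k] =i pred0.
Lemma half (v : A) : v + v = 0 -> v = 0.
Proof.
move=> h.
have h2 : (2%:R : k) != 0 by rewrite ((pcharf0P k).1 hchar 2).
have : (2%:R : k)^-1 *: (2%:R *: v) = 0 by rewrite scaler_nat -[v *+ 2]/(v + v) h scaler0.
by rewrite scalerA mulVf // scale1r.
Qed.

Lemma Cs_mul : Cs mul mul = 0.
Proof.
apply: half; rewrite Cs_swap.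
apply: (@W_eq0 _ _ (fun _ _ _ => 0)) => // x y z.
by rewrite mulA subrr.
Qed.

Notation brN' := (brN mul N).
Lemma brN_id x y z : brN' (mul x y) z + mul (brN' x y) z - (brN' x (mul y z) + mul x (brN' y z)) = 0.
Proof.
rewrite /brN !(mulDl', mulDr', mulBl, mulBr, ND, NB, mulNl, mulNr) !mulA.
ac_eq.
Qed.
Lemma Cs_brN : Cs mul brN' + Cs brN' mul = 0.
Proof.
rewrite Cs_swap; apply: (@W_eq0 _ _ (fun _ _ _ => 0)) => // x y z.
exact: brN_id.
Qed.

Notation F := (Theta mul n f).
Notation pi := (piN mul N).

Lemma sgnC a b (v : A) : sgn a (sgn b v) = sgn b (sgn a v).
Proof. by rewrite -!sgnD addnC. Qed.

Lemma pisum x y : \sum_(1 <= j < 4) pi j [:: x; y] = brN' x y.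
Proof. rewrite big_ltn // big_ltn // big_ltn // big_geq // /piN /brN /=; ac_eq. Qed.

Lemma LHS_eval r : deltaNS pi n.+1 F r s = sgn n (pcomp 2 n.+1 1 pi F r s
   + sgn n (pcomp 2 n.+1 2 pi F r s)
   - sgn n (\sum_(1 <= i < n.+2) sgn i.-1 (pcomp n.+1 2 i F pi r s))).
Proof.
rewrite /deltaNS /nsbracket big_ltn // big_ltn // big_geq // addr0.
have -> : (n.+1 - 1 = n)%N by slia.
have -> : ((1 - 1) * n = 0)%N by slia.
have -> : ((2 - 1) * n = n)%N by slia.
rewrite sgn0; congr (sgn _ (_ + _ - sgn _ _)).
by apply: eq_big_nat => i hi; have -> : ((i - 1) * (2 - 1) = i.-1)%N by slia.
Qed.

Lemma P1_low r : (1 <= r <= n.+1)%N ->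
  pcomp 2 n.+1 1 pi F r s = mul (F r (take n.+1 s)) (N (nth 0 s n.+1)).
Proof.
move=> h; rewrite /pcomp block1; ifs; rewrite !subst1 //.
by have -> : (r - 1 + 1 = r)%N by slia.
Qed.
Lemma P1_n2 : pcomp 2 n.+1 1 pi F n.+2 s =
  mul (N (\sum_(1 <= j < n.+3) F j (take n.+1 s))) (nth 0 s n.+1).
Proof.
rewrite /pcomp block1; ifs; rewrite !subst1 //.
by have -> : (n.+2 - n.+1 + 1 = 2)%N by slia.
Qed.
Lemma P1_n3 : pcomp 2 n.+1 1 pi F n.+3 s =
  mul (F n.+2 (take n.+1 s)) (N (nth 0 s n.+1))
  - N (mul (\sum_(1 <= j < n.+3) F j (take n.+1 s)) (nth 0 s n.+1)).
Proof. by rewrite /pcomp block1; ifs; rewrite !subst1 //. Qed.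

Lemma P2_1 : pcomp 2 n.+1 2 pi F 1 s =
  mul (nth 0 s 0) (N (\sum_(1 <= j < n.+3) F j (behead s))).
Proof. by rewrite /pcomp block2n //; ifs; rewrite !subst2n //. Qed.
Lemma P2_mid r : (2 <= r <= n.+2)%N ->
  pcomp 2 n.+1 2 pi F r s = mul (N (nth 0 s 0)) (F r.-1 (behead s)).
Proof.
move=> h; rewrite /pcomp block2n //; ifs; rewrite !subst2n //.
by have -> : (r - 2 + 1 = r.-1)%N by slia.
Qed.
Lemma P2_n3 : pcomp 2 n.+1 2 pi F n.+3 s =
  mul (N (nth 0 s 0)) (F n.+2 (behead s))
  - N (mul (nth 0 s 0) (\sum_(1 <= j < n.+3) F j (behead s))).
Proof. by rewrite /pcomp block2n //; ifs; rewrite !subst2n //. Qed.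

Lemma P3_low r i : (1 <= i <= n.+1)%N -> (r <= i.-1)%N ->
  pcomp n.+1 2 i F pi r s = F r (contract brN' i s).
Proof. by move=> h1 h2; rewrite /pcomp block2; [ifs; rewrite pisum subst2; (done || slia) | slia]. Qed.
Lemma P3_at r i : (1 <= i <= n.+1)%N -> (i.-1 < r <= i.+1)%N ->
  pcomp n.+1 2 i F pi r s = F i (contract (fun x y => pi (r - i + 1) [:: x; y]) i s).
Proof. by move=> h1 h2; rewrite /pcomp block2; [ifs; rewrite subst2; (done || slia) | slia]. Qed.
Lemma P3_high r i : (1 <= i <= n.+1)%N -> (i.+1 < r <= n.+2)%N ->
  pcomp n.+1 2 i F pi r s = F r.-1 (contract brN' i s).
Proof.
move=> h1 h2; rewrite /pcomp block2; [ifs; rewrite pisum subst2; try slia | slia].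
by have -> : (r - 2 + 1 = r.-1)%N by slia.
Qed.
Lemma P3_n3 i : (1 <= i <= n.+1)%N ->
  pcomp n.+1 2 i F pi n.+3 s = F i (contract (fun x y => pi 3 [:: x; y]) i s)
     + F n.+2 (contract brN' i s).
Proof. by move=> h1; rewrite /pcomp block2; [ifs; rewrite pisum !subst2; (done || slia) | slia]. Qed.

Lemma Th1g m (g : seq A -> A) t : Theta mul m g 1 t = sgn m.+1 (mul (nth 0 t 0) (g (behead t))).
Proof. by []. Qed.
Lemma mul_sum_sgnr z (E : nat -> nat) (X : nat -> A) (r : seq nat) :
  mul z (\sum_(i <- r) sgn (E i) (X i)) = \sum_(i <- r) sgn (E i) (mul z (X i)).
Proof. rewrite mul_sumr; apply: eq_bigr => i _; exact: mul_sgnr. Qed.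
Lemma mul_sum_sgnl z (E : nat -> nat) (X : nat -> A) (r : seq nat) :
  mul (\sum_(i <- r) sgn (E i) (X i)) z = \sum_(i <- r) sgn (E i) (mul (X i) z).
Proof. rewrite mul_suml; apply: eq_bigr => i _; exact: mul_sgnl. Qed.

Lemma case1 : deltaNS pi n.+1 F 1 s = Theta mul n.+1 (dN mul N n f) 1 s.
Proof.
rewrite LHS_eval P1_low // P2_1 Gs_hoch // big_ltn // big_add1 /=.
rewrite P3_at //.
have eS : \sum_(1 <= i < n.+1) sgn i (pcomp n.+1 2 i.+1 F pi 1 s)
   = sgn n.+1 (\sum_(1 <= i < n.+1) sgn i (mul (nth 0 s 0) (f (contract brN' i (behead s))))).
  rewrite sgn_sum; apply: eq_big_nat => i hi.
  rewrite P3_low; try slia.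
  rewrite Th1 nth0_contract ?behead_contract /=; try slia.
  by rewrite sgnC.
rewrite eS !Th1 nth0_contract1 ?behead_contract1 ?hs // Th1g /dN.
rewrite behead_take !nth_behead /=.
rewrite !(mulDr', mulBr, mulNr, mul_sum_sgnr, mul_sgnr, mul_sgnl, N_sgn, mulA).
rewrite nth_take //= !(sgnDr, sgnB, sgnN, sgn0).
rewrite !sgnE /=; case: (odd n); rewrite /= ?opprK; ac_eq.
Qed.

Lemma Thmidg m (g : seq A -> A) r t : (2 <= r <= m)%N -> Theta mul m g r t = 0.
Proof. by move=> h; rewrite /Theta; ifs. Qed.
Lemma Thn1g m (g : seq A -> A) t : (1 <= m)%N -> Theta mul m g m.+1 t = mul (g (take m t)) (nth 0 t m).
Proof. by move=> h; rewrite /Theta; ifs. Qed.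
Lemma Thn2g m (g : seq A -> A) t : Theta mul m g m.+2 t = \sum_(1 <= i < m.+1) sgn (m + i + 1) (g (contract mul i t)).
Proof. by rewrite /Theta; ifs. Qed.

Lemma split3 (G : nat -> A) : \sum_(1 <= i < n.+2) G i = G 1%N + \sum_(2 <= i < n.+1) G i + G n.+1.
Proof. by rewrite big_ltn // big_nat_recr //= addrA. Qed.

Lemma case_mid r : (2 <= r <= n.+1)%N ->
  deltaNS pi n.+1 F r s = Theta mul n.+1 (dN mul N n f) r s.
Proof.
move=> hr; rewrite Thmidg // LHS_eval P1_low ?P2_mid; try slia.
have LP1 : mul (F r (take n.+1 s)) (N (nth 0 s n.+1)) =
   if r == n.+1 then mul (f (take n s)) (mul (nth 0 s n) (N (nth 0 s n.+1))) else 0.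
  case: eqP => [->|h]; first by rewrite Thn1 take_takel // nth_take // mulA.
  by rewrite Thmid ?mul0l //; slia.
have LP2 : mul (N (nth 0 s 0)) (F r.-1 (behead s)) =
   if r == 2 then sgn n.+1 (mul (N (nth 0 s 0)) (mul (nth 0 s 1) (f (behead (behead s))))) else 0.
  case: eqP => [->|h]; first by rewrite Th1 mul_sgnr nth_behead.
  by rewrite Thmid ?mul0r //; slia.
have LS3 : \sum_(1 <= i < n.+2) sgn i.-1 (pcomp n.+1 2 i F pi r s) =
   (if r == 2 then sgn n.+1 (mul (N (nth 0 s 0)) (mul (nth 0 s 1) (f (behead (behead s))))) else 0)
   + sgn n (if r == n.+1 then mul (f (take n s)) (mul (nth 0 s n) (N (nth 0 s n.+1))) else 0).
  rewrite split3 big_nat_cond big1 ?addr0; last first.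
    move=> i /andP[/andP[h1 h2] _].
    have [h3|h3] := leqP r i.-1.
      by rewrite P3_low ?Thmid ?sgn_0 //; slia.
    have [h4|h4] := leqP r i.+1.
      by rewrite P3_at ?Thmid ?sgn_0 //; slia.
    by rewrite P3_high ?Thmid ?sgn_0 //; slia.
  congr (_ + _).
    case: eqP => [->|h].
      rewrite P3_at //= sgn0 Th1 nth0_contract1 ?behead_contract1 ?hs //=.
      by rewrite mulA.
    rewrite P3_high; try slia.
    by rewrite Thmid ?sgn0 //; slia.
  case: eqP => [->|h].
    rewrite P3_at; try slia.
    have -> : (n.+1 - n.+1 + 1 = 1)%N by slia.
    by rewrite Thn1 take_contractn // nthn_contractn.
  rewrite P3_low; try slia.
  by rewrite Thmid ?sgn_0 //; slia.
rewrite LP1 LP2 LS3.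
case: eqP => h1; case: eqP => h2; rewrite ?sgn_0 ?sgnK ?(sgnDr, sgnB, sgnN, sgn0);
  rewrite ?sgnE /=; case: (odd n); rewrite /= ?opprK ?oppr0; ac_eq.
Qed.

Lemma case_n2 : deltaNS pi n.+1 F n.+2 s = Theta mul n.+1 (dN mul N n f) n.+2 s.
Proof.
rewrite Thn1g // LHS_eval P1_n2 P2_mid ?Gs_hoch //; try slia.
rewrite big_nat_recr //= P3_at; try slia.
have -> : (n.+2 - n.+1 + 1 = 2)%N by slia.
rewrite !Thn1 take_contractn // nthn_contractn //=.
have eS : \sum_(1 <= i < n.+1) sgn i.-1 (pcomp n.+1 2 i F pi n.+2 s)
   = - \sum_(1 <= i < n.+1) sgn i (mul (f (contract brN' i (take n.+1 s))) (nth 0 s n.+1)).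
  rewrite -sumrN; apply: eq_big_nat => i hi.
  rewrite P3_high; try slia.
  rewrite /= Thn1 take_contract // nthn_contract //; try slia.
  by case: i hi => [|i] hi //=; rewrite sgnS opprK.
rewrite eS /dN behead_take !nth_take // take_takel //.
rewrite nth_behead.
rewrite !(mulDl', mulBl, mulNl, mul_sum_sgnl, mul_sgnr, mul_sgnl, N_sgn, mulA).
rewrite !(sgnDr, sgnB, sgnN, sgn0, sgnK).
rewrite !sgnE /=; case: (odd n); rewrite /= ?opprK; ac_eq.
Qed.

Lemma sgn_par a b (v : A) : odd a = odd b -> sgn a v = sgn b v.
Proof. by rewrite !sgnE => ->. Qed.
Lemma sum_sgn (E D : nat -> nat) c (X : nat -> A) a b :
  (forall i, (a <= i < b)%N -> odd (E i) = odd c (+) odd (D i)) ->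
  \sum_(a <= i < b) sgn (E i) (X i) = sgn c (\sum_(a <= i < b) sgn (D i) (X i)).
Proof.
move=> h; rewrite sgn_sum; apply: eq_big_nat => i hi.
by rewrite -sgnD; apply: sgn_par; rewrite oddD h.
Qed.
Lemma sum_sgn_eq (E D : nat -> nat) c (X : nat -> A) a b (Y : nat -> A) :
  (forall i, (a <= i < b)%N -> sgn (E i) (X i) = sgn c (sgn (D i) (Y i))) ->
  \sum_(a <= i < b) sgn (E i) (X i) = sgn c (\sum_(a <= i < b) sgn (D i) (Y i)).
Proof. by move=> h; rewrite sgn_sum; apply: eq_big_nat. Qed.
Lemma N_sum_sgn (E : nat -> nat) (X : nat -> A) (r : seq nat) :
  \sum_(i <- r) sgn (E i) (N (X i)) = N (\sum_(i <- r) sgn (E i) (X i)).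
Proof. rewrite N_sum; apply: eq_bigr => i _; by rewrite N_sgn. Qed.

Notation t1 := (take n.+1 s).
Notation t2 := (behead s).
Notation a0 := (nth 0 s 0).
Notation a1 := (nth 0 s 1).
Notation an := (nth 0 s n).
Notation an1 := (nth 0 s n.+1).
Notation QA := (\sum_(1 <= i < n.+1) sgn i (mul (f (contract mul i t1)) an1)).
Notation QB := (\sum_(1 <= i < n.+1) sgn i (mul a0 (f (contract mul i t2)))).

Lemma hoch_id :
  \sum_(1 <= i < n.+2) sgn (n.+1 + i + 1) (hoch mul n f (contract mul i s))
  = sgn n (mul (\sum_(1 <= j < n.+3) F j t1) an1) + mul a0 (\sum_(1 <= j < n.+3) F j t2).
Proof.
rewrite !Gs_hoch /hoch.
have e1 : \sum_(1 <= i < n.+2) sgn (n.+1 + i + 1)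
   (mul (nth 0 (contract mul i s) 0) (f (behead (contract mul i s))) +
    \sum_(1 <= i0 < n.+1) sgn i0 (f (contract mul i0 (contract mul i s))) +
    sgn n.+1 (mul (f (take n (contract mul i s))) (nth 0 (contract mul i s) n)))
  = sgn n.+1 (mul (mul a0 a1) (f (behead t2))) + sgn n.+1 QB + sgn n (Cs mul mul)
    + (sgn 1 QA + sgn n (mul (f (take n s)) (mul an an1))).
  under eq_bigr => i _ do rewrite !sgnDr.
  rewrite !big_split /=.
  congr (_ + _ + _).
  - rewrite big_ltn // big_add1 /= nth0_contract1 ?behead_contract1 ?hs //.
    congr (_ + _); first by apply: sgn_par; slia.
    apply: sum_sgn_eq => i hi.
    rewrite nth0_contract ?behead_contract /=; try slia.
    by rewrite -sgnD; apply: sgn_par; slia.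
  - rewrite /Cs sgn_sum; apply: eq_big_nat => i hi; rewrite !sgn_sum.
    by apply: eq_bigr => j _; rewrite -!sgnD; apply: sgn_par; slia.
  - rewrite big_nat_recr //= take_contractn // nthn_contractn //.
    congr (_ + _); last by rewrite -sgnD; apply: sgn_par; slia.
    apply: sum_sgn_eq => i hi.
    rewrite take_contract ?nthn_contract //; try slia.
    by rewrite -!sgnD; apply: sgn_par; slia.
rewrite e1 Cs_mul sgn_0 addr0.
rewrite nth_take // behead_take take_takel // nth_take // !nth_behead.
rewrite !(mulDl', mulDr', mul_sum_sgnl, mul_sum_sgnr, mul_sgnl, mul_sgnr, mulA).
rewrite !(sgnDr, sgnB, sgnN, sgn0, sgnK).
rewrite !sgnE /=; case: (odd n); rewrite /= ?opprK; ac_eq.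
Qed.

Notation SA := (\sum_(1 <= i < n.+1) sgn i (mul (f (contract mul i t1)) (N an1))).
Notation SB := (\sum_(1 <= i < n.+1) sgn i (mul (N a0) (f (contract mul i t2)))).

Lemma case_n3 : deltaNS pi n.+1 F n.+3 s = Theta mul n.+1 (dN mul N n f) n.+3 s.
Proof.
rewrite LHS_eval P1_n3 P2_n3 [RHS]Thn2g.
have eS3 : \sum_(1 <= i < n.+2) sgn i.-1 (pcomp n.+1 2 i F pi n.+3 s)
   = sgn n.+1 (- mul (N (mul a0 a1)) (f (behead t2)))
     + sgn n (- mul (f (take n s)) (N (mul an an1))) + sgn n (Cs brN' mul).
  transitivity (\sum_(1 <= i < n.+2) (sgn i.-1 (F i (contract (fun x y => pi 3 [:: x; y]) i s))
      + sgn i.-1 (F n.+2 (contract brN' i s)))).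
    by apply: eq_big_nat => i hi; rewrite P3_n3 ?sgnDr //; slia.
  rewrite big_split /=; congr (_ + _).
    rewrite split3 big_nat_cond big1 ?addr0; last first.
      by move=> i /andP[/andP[h1 h2] _]; rewrite Thmid ?sgn_0 //; slia.
    rewrite /= sgn0 Th1 nth0_contract1 ?behead_contract1 ?hs //= Thn1.
    by rewrite take_contractn // nthn_contractn //= mulNl mulNr.
  rewrite /Cs sgn_sum; apply: eq_big_nat => i hi; rewrite Thn2 !sgn_sum.
  by apply: eq_bigr => j _; rewrite -!sgnD; apply: sgn_par; slia.
rewrite eS3.
have eR : \sum_(1 <= i < n.+2) sgn (n.+1 + i + 1) (dN mul N n f (contract mul i s))
   = (sgn n.+1 (mul (N (mul a0 a1)) (f (behead t2))) + sgn n.+1 SB)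
     - (sgn 1 (sgn n (mul (f (take n s)) (N (mul an an1)))) + SA)
     + sgn n (Cs mul brN')
     - N (\sum_(1 <= i < n.+2) sgn (n.+1 + i + 1) (hoch mul n f (contract mul i s))).
  transitivity (\sum_(1 <= i < n.+2) (
     sgn (n.+1 + i + 1) (mul (N (nth 0 (contract mul i s) 0)) (f (behead (contract mul i s))))
   - sgn (n.+1 + i + 1) (sgn n (mul (f (take n (contract mul i s))) (N (nth 0 (contract mul i s) n))))
   + sgn (n.+1 + i + 1) (\sum_(1 <= j < n.+1) sgn j (f (contract brN' j (contract mul i s))))
   - sgn (n.+1 + i + 1) (N (hoch mul n f (contract mul i s))))).
    by apply: eq_bigr => i _; rewrite /dN !(sgnDr, sgnN).
  rewrite !big_split /= !sumrN N_sum_sgn.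
  congr (_ - _ + _ - _).
  - rewrite big_ltn // big_add1 /= nth0_contract1 ?behead_contract1 ?hs //.
    congr (_ + _); first by apply: sgn_par; slia.
    apply: sum_sgn_eq => i hi.
    rewrite nth0_contract ?behead_contract /=; try slia.
    by rewrite -sgnD; apply: sgn_par; slia.
  - rewrite big_nat_recr //= take_contractn // nthn_contractn // addrC.
    congr (_ + _); first by apply: sgn_par; slia.
    transitivity (sgn 0 SA); last by rewrite sgn0.
    apply: sum_sgn_eq => i hi.
    rewrite take_contract ?nthn_contract //; try slia.
    by rewrite -!sgnD; apply: sgn_par; slia.
  - rewrite /Cs sgn_sum; apply: eq_big_nat => i hi; rewrite !sgn_sum.
    by apply: eq_bigr => j _; rewrite -!sgnD; apply: sgn_par; slia.
rewrite eR hoch_id.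
have eC : Cs brN' mul = - Cs mul brN'.
  by apply/eqP; rewrite -subr_eq0 opprK addrC Cs_brN.
rewrite eC !Thn2.
rewrite mul_sum_sgnl mul_sum_sgnr.
rewrite (@sum_sgn (fun i => n + i + 1)%N (fun i => i) n.+1); last by move=> i _; slia.
rewrite (@sum_sgn (fun i => n + i + 1)%N (fun i => i) n.+1
   (fun i => mul (N a0) (f (contract mul i t2)))); last by move=> i _; slia.
rewrite !(ND, NB, NN, N_sgn, mulNl, mulNr).
rewrite !(sgnDr, sgnB, sgnN, sgn0, sgnK).
rewrite !sgnE /=; case: (odd n); rewrite /= ?opprK; ac_eq.
Qed.

End Main.

Unset Implicit Arguments.

Theorem proposition2p16 (k : fieldType) (A : lmodType k)
    (mul : A -> A -> A) (N : A -> A) :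
  [pchar k] =i pred0 ->
  (forall (c : k) (x y z : A), mul (c *: x + y) z = c *: mul x z + mul y z) ->
  (forall (c : k) (x y z : A), mul z (c *: x + y) = c *: mul z x + mul z y) ->
  (forall x y z : A, mul (mul x y) z = mul x (mul y z)) ->
  (forall (c : k) (x y : A), N (c *: x + y) = c *: N x + N y) ->
  is_Nijenhuis mul N ->
  forall (n : nat) (f : seq A -> A), (1 <= n)%N -> multilinear n f ->
  forall (r : nat) (s : seq A), (1 <= r <= n.+3)%N -> size s = n.+2 ->
    deltaNS (piN mul N) n.+1 (Theta mul n f) r s
    = Theta mul n.+1 (dN mul N n f) r s.
Proof.
move=> hchar mulDl mulDr mulA NL _ n f n1 fml r s hr hs.
have [->|h1] := eqVneq r 1%N; first by apply: case1.
have [h2|h2] := leqP r n.+1; first by apply: case_mid => //; slia.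
have [->|h3] := eqVneq r n.+2; first by apply: case_n2.
have -> : r = n.+3 by slia.
by apply: case_n3.
Qed.
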